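(* Let $I$ and $J$ be finitely generated graded right $A$-submodules of $Q_{\mathrm{gr}}(A)$ with structure constants $\{c_i\}_{i\in\mathbb{Z}}$ and $\{d_i\}_{i\in\mathbb{Z}}$ respectively. Then $I\cong J$ as graded right $A$-modules if and only if $c_i=d_i$ for all $i\in\mathbb{Z}$.
   Context: $\Bbbk$ is an algebraically closed field of characteristic $0$; $\sigma$ is the automorphism of $\Bbbk[z]$ (and $\Bbbk(z)$) with $\sigma(z)=z+1$. For $\alpha\in\Bbbk$, $f=z(z+\alpha)$ and $A=A(f)$ is generated by $\Bbbk[z]$, $x$, $y$ with $xz=(z+1)x$, $yz=(z-1)y$, $xy=f$, $yx=\sigma^{-1}(f)$, graded by $\deg x=1,\deg y=-1,\deg z=0$. $Q_{\mathrm{gr}}(A)$ is the graded quotient ring (localization at nonzero homogeneous elements), which equals the skew Laurent ring $\Bbbk(z)[x,x^{-1};\sigma]$ (with $xg=\sigma(g)x$ and $y=x^{-1}f$). Every finitely generated graded right $A$-submodule $I\subseteq Q_{\mathrm{gr}}(A)$ can be written $I=\bigoplus_{i\in\mathbb{Z}}\Bbbk[z]a_ix^i$ with $a_i\in\Bbbk(z)$ nonzero; then $c_i:=a_ia_{i+1}^{-1}$, normalized to be monic, is a polynomial in $\{1,\sigma^i(z),\sigma^i(z+\alpha),\sigma^i(f)\}$. The sequence $\{c_i\}$ is called the structure constants of $I$ (it does not depend on the choice of generators $a_i$). *)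

(* Defs.v *)
From HB Require Import structures.
From mathcomp Require Import all_boot all_order all_algebra fraction.
Set Implicit Arguments. Unset Strict Implicit. Unset Printing Implicit Defensive.
Import Order.TTheory GRing.Theory.
Local Open Scope ring_scope.

Notation "x %:F" := (@FracField.tofrac _ x) .
Notation ratf K := {fraction {poly K}}.

Definition shiftp (K : fieldType) (i : int) (p : {poly K}) : {poly K} :=
  p \Po ('X + (i%:~R)%:P).

Definition fpol (K : fieldType) (alpha : K) : {poly K} := 'X * ('X + alpha%:P).

(* A homogeneous element of Q_gr(A) = k(z)[x,x^-1;sigma] of degree i is
   g x^i with g in k(z); we represent it by the pair (i, g).
   Right actions of the generators of A on g x^i :
     (g x^i) . p = (g sigma^i(p)) x^i            (p in k[z])
     (g x^i) . x = g x^(i+1)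
     (g x^i) . y = g x^i x^-1 f = (g sigma^(i-1)(f)) x^(i-1).
   A graded subset of Q_gr(A) is given by its homogeneous components
   I i : pred (ratf K)  (I_i = { g | g x^i in I }). *)

Definition gr_submodule (K : fieldType) (alpha : K)
    (I : int -> ratf K -> Prop) : Prop :=
  forall i : int,
    I i 0 /\
    (forall g h, I i g -> I i h -> I i (g + h)) /\
    (forall g (p : {poly K}), I i g -> I i (g * (shiftp i p)%:F)) /\
    (forall g, I i g -> I (i + 1) g) /\
    (forall g, I i g -> I (i - 1) (g * (shiftp (i - 1) (fpol alpha))%:F)).

Inductive gen_by (K : fieldType) (alpha : K) (gens : seq (int * ratf K))
    : int -> ratf K -> Prop :=
  | gen_base i g : (i, g) \in gens -> gen_by alpha gens i g
  | gen_zero i : gen_by alpha gens i 0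
  | gen_add i g h : gen_by alpha gens i g -> gen_by alpha gens i h ->
      gen_by alpha gens i (g + h)
  | gen_mulp i g (p : {poly K}) : gen_by alpha gens i g ->
      gen_by alpha gens i (g * (shiftp i p)%:F)
  | gen_mulx i g : gen_by alpha gens i g -> gen_by alpha gens (i + 1) g
  | gen_muly i g : gen_by alpha gens i g ->
      gen_by alpha gens (i - 1) (g * (shiftp (i - 1) (fpol alpha))%:F).

Definition fg_gr_submodule (K : fieldType) (alpha : K)
    (I : int -> ratf K -> Prop) : Prop :=
  gr_submodule alpha I /\
  exists gens : seq (int * ratf K),
    forall i g, I i g <-> gen_by alpha gens i g.

Definition structure_constants (K : fieldType)
    (I : int -> ratf K -> Prop) (c : int -> {poly K}) : Prop :=
  exists a : int -> ratf K,
    (forall i, a i != 0) /\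
    (forall i g, I i g <-> exists p : {poly K}, g = p%:F * a i) /\
    (forall i, c i \is monic /\
       exists lam : K, lam != 0 /\ (c i)%:F = (lam%:P)%:F * (a i / a (i + 1))).

Definition gr_iso (K : fieldType) (alpha : K)
    (I J : int -> ratf K -> Prop) : Prop :=
  exists phi : int -> ratf K -> ratf K,
    forall i : int,
      (forall g, I i g -> J i (phi i g)) /\
      (forall g h, I i g -> I i h -> phi i (g + h) = phi i g + phi i h) /\
      (forall g (p : {poly K}), I i g ->
          phi i (g * (shiftp i p)%:F) = phi i g * (shiftp i p)%:F) /\
      (forall g, I i g -> phi (i + 1) g = phi i g) /\
      (forall g, I i g ->
          phi (i - 1) (g * (shiftp (i - 1) (fpol alpha))%:F)
          = phi i g * (shiftp (i - 1) (fpol alpha))%:F) /\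
      (forall g h, I i g -> I i h -> phi i g = phi i h -> g = h) /\
      (forall h, J i h -> exists2 g, I i g & phi i g = h).

(* Main.v *)
Require Import Defs.
From HB Require Import structures.
From mathcomp Require Import all_boot all_order all_algebra fraction.
From mathcomp Require Import ring.
Import GRing.Theory.
Local Open Scope ring_scope.

Section H.
Variable K : fieldType.
Definition kc (x : K) : ratf K := (x%:P)%:F.
Lemma kcM x y : kc (x * y) = kc x * kc y.
Proof. by rewrite /kc polyCM rmorphM. Qed.
Lemma kc1 : kc 1 = 1. Proof. by rewrite /kc rmorph1. Qed.
Lemma kc_eq0 x : (kc x == 0) = (x == 0).
Proof. by rewrite /kc tofrac_eq0 polyC_eq0. Qed.
Lemma kcV x : kc x^-1 = (kc x)^-1.
Proof.
have [->|nz] := eqVneq x 0; first by rewrite invr0 /kc polyC0 rmorph0 invr0.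
apply: (@mulIf _ (kc x)); first by rewrite kc_eq0.
by rewrite -kcM mulVf // kc1 mulVf // kc_eq0.
Qed.
Lemma shiftpK (i : int) (p : {poly K}) : shiftp i (shiftp (- i) p) = p.
Proof.
rewrite /shiftp.
have -> : ('X + (i%:~R)%:P : {poly K}) = 'X - (- (i%:~R : K))%:P.
  by rewrite polyCN opprK.
by rewrite intrN comp_polyXaddC_K.
Qed.
Lemma fld1 (m x y l p B A : K) : y != 0 -> l != 0 -> B != 0 -> A != 0 ->
 m * (p * (x * B) / y / B) = m * x / (y * l) * (l * (p * A / A)).
Proof. move=> yn ln Bn An. field. by rewrite An ln yn Bn. Qed.
Lemma fld2 (l m A0 A1 B0 B1 : K) : l != 0 -> m != 0 -> A0 != 0 -> A1 != 0 -> B1 != 0 ->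
  l * (A0 / A1) = m * (B0 / B1) -> B1 / A1 = m / l * (B0 / A0).
Proof.
move=> ln mn A0n A1n B1n E.
have -> : B0 = (m * (B0 / B1)) * B1 / m by field; rewrite B1n mn.
rewrite -E; field; by rewrite A0n A1n ln mn.
Qed.
Lemma fld3 (P A R x : K) : x != 0 -> P * A * R = P * x^-1 * (x * R * A).
Proof. move=> xn; field; exact xn. Qed.
Lemma rng1 (P x A R : K) : P * x * A * R = P * (x * R * A).
Proof. ring. Qed.
End H.
Arguments kc {K}.
Arguments kcM {K}.
Arguments kcV {K}.
Arguments kc_eq0 {K}.
Arguments shiftpK {K}.

Theorem lemma3p4 (K : closedFieldType) (Hchar : [pchar K] =i pred0) (alpha : K)
    (I J : int -> ratf K -> Prop) (c d : int -> {poly K}) :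
  fg_gr_submodule alpha I -> fg_gr_submodule alpha J ->
  structure_constants I c -> structure_constants J d ->
  (gr_iso alpha I J <-> forall i : int, c i = d i).
Proof.
move=> [HgI _] _ [a [Ha0 [HaI Hc]]] [b [Hb0 [HbJ Hd]]].
have Iaj j : I j (a j) by apply/HaI; exists 1; rewrite rmorph1 mul1r.
split.
- move=> [phi H].
  have Q j : exists k : K, k != 0 /\ phi j (a j) = kc k * b j.
    have [P1 [P2 [P3 [P4 [P5 [P6 P7]]]]]] := H j.
    have lin p : phi j (p%:F * a j) = p%:F * phi j (a j).
      by rewrite mulrC -{1}(shiftpK j p) P3 // shiftpK mulrC.
    have [p0 Hp0] := (HbJ j _).1 (P1 _ (Iaj j)).
    have Jb : J j (b j) by apply/HbJ; exists 1; rewrite rmorph1 mul1r.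
    have [g Ig Eg] := P7 _ Jb.
    have [p1 Ep1] := (HaI j g).1 Ig.
    rewrite Ep1 lin Hp0 mulrA -rmorphM in Eg.
    have E1 : p1 * p0 = 1.
      apply/eqP; rewrite -tofrac_eq rmorph1; apply/eqP.
      by apply: (mulIf (Hb0 j)); rewrite Eg mul1r.
    have : p0 \is a GRing.unit by apply/unitrPr; exists p1; rewrite mulrC.
    rewrite poly_unitE => /andP [/size_poly1P [k kn Ek] _].
    by exists k; split => //; rewrite Hp0 Ek.
  move=> i.
  have [k0 [k0n E0]] := Q i.
  have [k1 [k1n E1]] := Q (i + 1).
  have [_ [_ [_ [Hx _]]]] := HgI i.
  have [p2 Ea] := (HaI (i + 1) (a i)).1 (Hx _ (Iaj i)).
  have [_ [_ [_ [P4 _]]]] := H i.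
  have F := P4 _ (Iaj i).
  have [P1 [P2 [P3 _]]] := H (i + 1).
  have lin p : phi (i+1) (p%:F * a (i+1)) = p%:F * phi (i+1) (a (i+1)).
    by rewrite mulrC -{1}(shiftpK (i+1) p) P3 // shiftpK mulrC.
  rewrite {1}Ea lin E1 E0 in F.
  have [cm [lam [lamn El]]] := Hc i.
  have [dm [mu [mun Em]]] := Hd i.
  have k0n' : kc k0 != 0 by rewrite kc_eq0.
  have lamn' : kc lam != 0 by rewrite kc_eq0.
  have Eb : b i = p2%:F * (kc k1 * b (i + 1)) / kc k0.
    by rewrite F mulrAC (divff k0n') mul1r.
  have Ed : d i = (mu * k1 / (k0 * lam))%:P * c i.
    apply/eqP; rewrite -tofrac_eq tofracM; apply/eqP.
    rewrite Em El; rewrite -/(kc _) -/(kc _) -/(kc _).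
    rewrite !(kcM, kcV) Eb Ea.
    exact: (@fld1 _ _ _ _ _ _ _ _ k0n' lamn' (Hb0 (i+1)) (Ha0 (i+1))).
  move/monicP: dm; move/monicP: cm => cm; rewrite Ed mul_polyC lead_coefZ cm mulr1 => th.
  by rewrite th scale1r.
- move=> cd.
  pose r j := b j / a j.
  have rn j : r j != 0 by rewrite mulf_neq0 ?invr_eq0; [|exact: Hb0|exact: Ha0].
  have step j : exists m : K, m != 0 /\ r (j + 1) = kc m * r j.
    have [_ [lam [lamn El]]] := Hc j.
    have [_ [mu [mun Em]]] := Hd j.
    have E : kc lam * (a j / a (j + 1)) = kc mu * (b j / b (j + 1)).
      by rewrite /kc -El -Em cd.
    exists (mu / lam); split; first by rewrite mulf_neq0 ?invr_eq0.
    rewrite kcM kcV.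
    apply: fld2 E; by [rewrite kc_eq0 | exact: Ha0 | exact: Hb0].
  have S j : exists k : K, k != 0 /\ r j = kc k * r 0.
    have Pos n : exists k : K, k != 0 /\ r (n%:Z) = kc k * r 0.
      elim: n => [|n [k [kn Ek]]]; first by exists 1; split; [exact: oner_neq0 | rewrite kc1 mul1r].
      have -> : (n.+1 : int) = n%:Z + 1 by rewrite -addn1 PoszD.
      have [m [mn Em]] := step n.
      exists (m * k); split; first by rewrite mulf_neq0.
      by rewrite Em Ek kcM mulrA.
    have Neg n : exists k : K, k != 0 /\ r (- (n%:Z)) = kc k * r 0.
      elim: n => [|n [k [kn Ek]]]; first by exists 1; split; [exact: oner_neq0 | rewrite oppr0 kc1 mul1r].
      have [m [mn Em]] := step (- (n.+1%:Z)).
      have e : - (n.+1%:Z) + 1 = - (n%:Z) by rewrite -addn1 PoszD opprD addrK.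
      rewrite e in Em.
      exists (m^-1 * k); split; first by rewrite mulf_neq0 ?invr_eq0.
      have mn' : kc m != 0 by rewrite kc_eq0.
      by rewrite kcM -mulrA -Ek Em kcV (mulKf mn').
    case: j => n; first exact: Pos n.
    by rewrite NegzE; exact: Neg.
  have R0n := rn 0.
  have bE j k : r j = kc k * r 0 -> b j = kc k * r 0 * a j.
    by move=> <-; rewrite /r (divfK (Ha0 j)).
  exists (fun _ g => g * r 0) => i.
  have [k [kn Ek]] := S i.
  have Eb := bE _ _ Ek.
  have kn' : kc k != 0 by rewrite kc_eq0.
  split.
    move=> g /HaI [p ->]; apply/HbJ; exists (p * (k^-1)%:P).
    rewrite tofracM -/(kc _) Eb kcV; exact: fld3.
  split; first by move=> g h _ _; rewrite mulrDl.
  split; first by move=> g p _; rewrite mulrAC.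
  split; first by [].
  split; first by move=> g _; rewrite mulrAC.
  split; first by move=> g h _ _; apply: mulIf.
  move=> h /HbJ [p ->]; exists ((p * k%:P)%:F * a i); first by apply/HaI; exists (p * k%:P).
  rewrite tofracM -/(kc _) Eb; exact: rng1.
Qed.
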